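(* For every integer $k\ge 2$, the user partition multicast rate of the $(k,2)$-GIC problem (defined in the context) satisfies $\beta_{UPM}\le k$.
   Context: GIC problem: there are $m$ packets $x_1,\dots,x_m$; for each $i\in[m]$ there is a nonempty set $U_i=\{u_i^1,\dots,u_i^{|U_i|}\}$ of users demanding $x_i$, $U=\bigcup_i U_i$; user $u_i^j$ knows the packets $x_{i'}$, $i'\in A_i^j$, where $A_i^j\subseteq[m]\setminus\{i\}$. UPM rate: for a partition of $U$ into nonempty disjoint sets $W_1,\dots,W_h$ ($1\le h\le m$), let $Y_e=\{i: u_i^j\in W_e\text{ for some } j\}$ and $c_e=\min\{|A_i^j\cap Y_e|: u_i^j\in W_e\}$; $\beta_{UPM}$ is the minimum over all such partitions of $\sum_{e=1}^h(|Y_e|-c_e)$. The $(k,2)$-GIC problem: $m=k(k-1)/2$ packets, each packet $x_i$ demanded by exactly two users $U_i=\{u_i^1,u_i^2\}$. For $l\in[k]$ define $I_l^1=\{(l-1)k+a-\tfrac{l(l-1)}{2} : a=1,\dots,k-l\}$ for $l\ne k$, $I_k^1=\emptyset$; $I_l^2=\{(a-1)k+l-\tfrac{a(a+1)}{2} : a=1,\dots,l-1\}$ for $l\ne1$, $I_1^2=\emptyset$; $I_l=I_l^1\cup I_l^2$. The side information of user $u_i^j$ ($j\in\{1,2\}$) is $A_i^j=I_l\setminus\{i\}$ where $l$ is the index with $i\in I_l^j$. *)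

(* Defs.v *)
From mathcomp Require Import all_boot.
Set Implicit Arguments. Unset Strict Implicit. Unset Printing Implicit Defensive.

(* General GIC problem: m packets (indexed by 'I_m, packet x_{i+1} is   *)
(* index i), a finite type of users, each user demanding one packet and *)
(* knowing a set of packets as side information.                        *)
Record GIC := {
  gic_m : nat;
  gic_user : finType;
  gic_dem : gic_user -> 'I_gic_m;
  gic_side : gic_user -> {set 'I_gic_m}
}.

Section UPM.
Variable G : GIC.
Local Notation m := (gic_m G).
Local Notation U := (gic_user G).
Local Notation dem := (@gic_dem G).
Local Notation side := (@gic_side G).

Definition Yset (W : {set U}) : {set 'I_m} := [set dem u | u in W].

(* c_e = min over users u in W_e of |A_u ∩ Y_e|.  The identity #|Y_e| of
   the fold is an upper bound of every term, so for nonempty W it is the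
   exact minimum. *)
Definition cval (W : {set U}) : nat :=
  \big[minn/#|Yset W|]_(u in W) #|side u :&: Yset W|.

Definition upm_value (P : {set {set U}}) : nat :=
  \sum_(W in P) (#|Yset W| - cval W).

Definition upm_partition (P : {set {set U}}) : bool :=
  partition P [set: U] && (0 < #|P| <= m).

(* The identity m of the
   fold is attained by the partition {U_i} (value m) in any GIC problem
   where each U_i is nonempty and i \notin A_i^j, so it does not affect
   the minimum. *)
Definition beta_UPM : nat :=
  \big[minn/m]_(P : {set {set U}} | upm_partition P) upm_value P.
End UPM.

(* ordinal i-1.  Users u_i^j are pairs (i, j) with j : 'I_2 (j=0 <-> 1, *)
(* j=1 <-> 2).                                                          *)
Definition mk2 (k : nat) : nat := k * (k - 1) %/ 2.

Definition I1 (k l : nat) : {set 'I_(mk2 k)} :=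
  [set i : 'I_(mk2 k) |
     has (fun a => i.+1 == (l - 1) * k + a - l * (l - 1) %/ 2) (iota 1 (k - l))].

Definition I2 (k l : nat) : {set 'I_(mk2 k)} :=
  [set i : 'I_(mk2 k) |
     has (fun a => i.+1 == (a - 1) * k + l - a * (a + 1) %/ 2) (iota 1 (l - 1))].

Definition Il (k l : nat) : {set 'I_(mk2 k)} := I1 k l :|: I2 k l.

Definition Ilj (k l : nat) (j : 'I_2) : {set 'I_(mk2 k)} :=
  if val j == 0 then I1 k l else I2 k l.

Definition side_k2 (k : nat) (u : 'I_(mk2 k) * 'I_2) : {set 'I_(mk2 k)} :=
  match [pick l : 'I_k | u.1 \in Ilj k l.+1 u.2] with
  | Some l => Il k l.+1 :\ u.1
  | None => set0
  end.

Definition GIC_k2 (k : nat) : GIC :=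
  {| gic_m := mk2 k;
     gic_user := ('I_(mk2 k) * 'I_2)%type;
     gic_dem := fun u => u.1;
     gic_side := side_k2 (k := k) |}.

(* Main.v *)
Require Import Defs.
From mathcomp Require Import all_boot zify.

Fixpoint Srow (k L : nat) : nat := if L is L'.+1 then Srow k L' + (k - L) else 0.
Definition tri L := L.+1 * L %/ 2.

Lemma triS L : tri L.+1 = tri L + L.+1.
Proof.
rewrite /tri.
have -> : L.+2 * L.+1 = L.+1 * 2 + L.+1 * L by rewrite mulnC; lia.
by rewrite divnMDl // addnC.
Qed.

Lemma tri2 L : tri L * 2 = L.+1 * L.
Proof.
elim: L => [|L IH]; first by [].
rewrite triS mulnDl IH; lia.
Qed.

Lemma Srow_tri k L : L <= k -> Srow k L + tri L = L * k.
Proof.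
elim: L => [|L IH] Lk; first by [].
rewrite /= triS.
have := IH (ltnW Lk). lia.
Qed.

Lemma find_row k i n : i < Srow k n -> exists2 L, L < n & Srow k L <= i < Srow k L.+1.
Proof.
elim: n => [|n IH] //= H.
case: (ltnP i (Srow k n)) => h.
  by have [L HL HH] := IH h; exists L => //; apply: ltnW.
by exists n => //; rewrite h H.
Qed.

Lemma mk2_Srow k : 0 < k -> mk2 k = Srow k k.-1.
Proof.
move=> k0.
have h1 := @Srow_tri k k.-1 (leq_pred k).
have h2 := tri2 k.-1.
rewrite prednK // in h2.
rewrite /mk2 -subn1.
have h3 : k.-1 = k - 1 by rewrite subn1.
rewrite h3 in h1 h2.
have -> : k * (k - 1) = tri (k - 1) * 2 by rewrite h2; lia.
rewrite mulnK //; lia.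
Qed.

Lemma ex_l k (u : 'I_(mk2 k) * 'I_2) : 2 <= k -> exists l : 'I_k, u.1 \in Ilj k l.+1 u.2.
Proof.
move=> k2; case: u => i j /=.
have k0 : 0 < k by lia.
have := ltn_ord i; rewrite {2}(@mk2_Srow k k0) => /find_row [L HL /andP[H1 H2]].
have HS := @Srow_tri k L (ltnW (leq_trans HL (leq_pred k))).
have HS1 := @Srow_tri k L.+1 (leq_trans HL (leq_pred k)).
rewrite triS in HS1.
move: H2; rewrite /= => H2.
case: (eqVneq (val j) 0) => hj.
  have Lk : L < k by lia.
  exists (Ordinal Lk); rewrite /Ilj ?hj ?(negbTE hj) inE; apply/hasP; exists (i.+1 - Srow k L).
    rewrite mem_iota /=; lia.
  rewrite /= !subSS !subn0 (_ : L.+1 * L %/ 2 = tri L) //; apply/eqP; lia.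
have Lk : L + (i.+1 - Srow k L) < k by lia.
exists (Ordinal Lk); rewrite /Ilj ?hj ?(negbTE hj) inE; apply/hasP; exists L.+1.
  rewrite mem_iota /=; lia.
have -> : L.+1 * (L.+1 + 1) %/ 2 = tri L.+1 by rewrite /tri addn1 mulnC.
rewrite triS subSS subn0 /=; apply/eqP; lia.
Qed.

Lemma bigmin_le (I : finType) (P : pred I) (F : I -> nat) x0 i :
  P i -> \big[minn/x0]_(j | P j) F j <= F i.
Proof.
move=> Pi; have : i \in index_enum I by rewrite mem_index_enum.
elim: (index_enum I) => [//|a r IH]; rewrite inE big_cons => /orP [/eqP <-|ir].
  by rewrite Pi geq_minl.
case: ifP => _; last exact: IH.
by apply: leq_trans (geq_minr _ _) (IH ir).
Qed.

Lemma case_k2 : beta_UPM (GIC_k2 2) <= 2.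
Proof.
set G := GIC_k2 2.
have x0 : gic_user G by exact: (@Ordinal 1 0 isT, ord0).
apply: leq_trans (@bigmin_le _ (@upm_partition G) (@upm_value G) (gic_m G) [set setT] _) _.
  rewrite /upm_partition /partition cover1 eqxx trivIset1 cards1 inE /=.
  rewrite andbT; apply/eqP => /setP /(_ x0); by rewrite !inE.
rewrite /upm_value big_set1.
apply: leq_trans (leq_subr _ _) _.
apply: leq_trans (max_card _) _.
by rewrite card_ord.
Qed.

Theorem proposition3 (k : nat) : 2 <= k -> beta_UPM (GIC_k2 k) <= k.
Proof.
move=> k2.
case: (eqVneq k 2) => [->|kn2]; first exact: case_k2.
have k3 : 3 <= k by lia.
have k0 : 0 < k by lia.
pose l0 : 'I_k := Ordinal k0.
set G := GIC_k2 k.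
pose f (u : gic_user G) : 'I_k := odflt l0 [pick l : 'I_k | u.1 \in Ilj k l.+1 u.2].
have fP u : u.1 \in Ilj k (f u).+1 u.2.
  rewrite /f; case: pickP => [l //|H].
  by have [l Hl] := ex_l k u k2; move: (H l); rewrite Hl.
have fI u : u.1 \in Il k (f u).+1.
  by have := fP u; rewrite /Il /Ilj inE; case: ifP => _ ->; rewrite ?orbT.
have sideE u : gic_side u = Il k (f u).+1 :\ u.1.
  rewrite /= /side_k2 /f; case: pickP => [l _ //|H].
  by have [l Hl] := ex_l k u k2; move: (H l); rewrite Hl.
have kle : k <= mk2 k.
  rewrite /mk2; have -> : k = k * 2 %/ 2 by rewrite mulnK.
  by apply: leq_div2r; apply: leq_mul => //; lia.
have mpos : 0 < mk2 k by lia.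
have x0 : gic_user G by exact: (Ordinal mpos, ord0).
pose P := preim_partition f [set: gic_user G].
have cardP : #|P| <= k.
  pose h := fun l : 'I_k => [set y in [set: gic_user G] | l == f y].
  have -> : P = [set h x | x in [set f x | x in [set: gic_user G]]] by rewrite -imset_comp.
  apply: leq_trans (leq_imset_card _ _) _.
  by apply: leq_trans (max_card _) _; rewrite card_ord.
apply: leq_trans (@bigmin_le _ (@upm_partition G) (@upm_value G) (gic_m G) P _) _.
  rewrite /upm_partition preim_partitionP /=.
  apply/andP; split; last by apply: leq_trans kle.
  apply/card_gt0P; exists [set y in [set: gic_user G] | f x0 == f y].
  by apply: imset_f; rewrite inE.
rewrite /upm_value; apply: leq_trans cardP.
rewrite -sum1_card; apply: leq_sum => W /imsetP [x _ ->].
set W' := [set y in _ | _].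
set Y := Yset W'.
suff : #|Y| - 1 <= cval W' by lia.
rewrite /cval; apply: (big_ind (fun n => #|Y| - 1 <= n)).
- exact: leq_subr.
- by move=> a b ha hb; rewrite leq_min ha hb.
move=> u uW.
have fu : f u = f x by rewrite !inE in uW; move/eqP: uW.
have YI : Y \subset Il k (f x).+1.
  apply/subsetP => y /imsetP [v vW ->]; rewrite !inE in vW; move/eqP: vW => fv.
  by rewrite fv; apply: fI.
have uY : u.1 \in Y by apply: (imset_f (fun u : gic_user G => u.1)).
apply: leq_trans (_ : #|Y :\ u.1| <= _).
  by rewrite (cardsD1 u.1 Y) uY add1n subn1.
apply: subset_leq_card; apply/subsetP => y /setD1P [yn yY]; rewrite sideE fu.
apply/setIP; split => //; apply/setD1P; split => //; exact: (subsetP YI).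
Qed.
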